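(* Let $f : \{0, 1\}^n \to \{0, 1\}$ be a Boolean function. Then $\mathsf{Pat}^{\mathsf{M}}(f) \geq \mathrm{spar}(f)$.
   Context: Every $f:\{0,1\}^n\to\{0,1\}$ has a unique M\''obius expansion $f=\sum_{S\subseteq[n]}\widetilde f(S)\mathsf{AND}_S$ with real coefficients, where $\mathsf{AND}_S(x)=\prod_{i\in S}x_i$; its M\''obius support is $\mathcal{S}_f=\{S:\widetilde f(S)\ne0\}$ and its M\''obius sparsity is $\mathrm{spar}(f)=|\mathcal S_f|$. The pattern of $x$ is $(\mathsf{AND}_S(x))_{S\in\mathcal S_f}$, and $\mathsf{Pat}^{\mathsf{M}}(f)$ is the number of distinct patterns over all $x\in\{0,1\}^n$. *)

(* Defs.v *)
From mathcomp Require Import all_boot all_order all_algebra.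
Set Implicit Arguments. Unset Strict Implicit. Unset Printing Implicit Defensive.
Import GRing.Theory Num.Theory.
Local Open Scope ring_scope.

Definition cube (n : nat) := {ffun 'I_n -> bool}.

Definition AND (n : nat) (S : {set 'I_n}) (x : cube n) : bool :=
  [forall i in S, x i].

Definition is_mobius_expansion (R : nzRingType) (n : nat) (f : cube n -> bool)
    (c : {set 'I_n} -> R) : Prop :=
  forall x : cube n, ((f x)%:R : R) = \sum_(S : {set 'I_n}) c S * ((AND S x)%:R).

Definition mob_support (R : nzRingType) (n : nat) (c : {set 'I_n} -> R) :
    {set {set 'I_n}} := [set S | c S != 0].

Definition spar (R : nzRingType) (n : nat) (c : {set 'I_n} -> R) : nat :=
  #|mob_support c|.

(* pattern of x: the vector (AND_S x)_{S in support}; encoded as a finite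
   function on all sets, forced to false outside the support. *)
Definition pattern (R : nzRingType) (n : nat) (c : {set 'I_n} -> R) (x : cube n) :
    {ffun {set 'I_n} -> bool} :=
  [ffun S => (S \in mob_support c) && AND S x].

Definition PatM (R : nzRingType) (n : nat) (c : {set 'I_n} -> R) : nat :=
  #|[set pattern c x | x : cube n]|.

(* Main.v *)
Require Import Defs.
From mathcomp Require Import all_boot all_order all_algebra.

Theorem claim4p2 (R : realFieldType) (n : nat) (f : {ffun 'I_n -> bool} -> bool)
    (c : {set 'I_n} -> R) :
  is_mobius_expansion f c -> spar c <= PatM c.
Proof.
move=> _.
pose ind (S : {set 'I_n}) : cube n := [ffun i => i \in S].
have AE : forall T S, AND T (ind S) = (T \subset S).
  move=> T S; rewrite /AND; apply/forallP/subsetP => H.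
  - by move=> i iT; have := H i; rewrite iT /= ffunE.
  - by move=> i; apply/implyP => iT; rewrite ffunE; apply: H.
have PE : forall S T, pattern c (ind S) T = (T \in mob_support c) && (T \subset S).
  by move=> S T; rewrite /pattern ffunE AE.
have inj : {in mob_support c &, injective (fun S => pattern c (ind S))}.
  move=> S S' HS HS' E.
  have h1 := PE S S; have h2 := PE S' S'.
  rewrite E PE HS subxx /= in h1.
  rewrite -E PE HS' subxx /= in h2.
  by apply/eqP; rewrite eqEsubset h1 h2.
rewrite /spar /PatM -(card_in_imset inj).
apply: subset_leq_card; apply/subsetP => p /imsetP [S _ ->].
by apply/imsetP; exists (ind S).
Qed.
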